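(* Let $\mathcal H$ be a cycle-reset SHS and let $L^{\mathsf{SR}}=\{(\ell,\ell')\in L^2:$ there is at least one edge from $\ell$ to $\ell'$ and every edge $(\ell,a,\ell')\in E$ is strongly reset$\}$. Then for every initial distribution $\nu$ on $S_{\mathcal H}$, $$\mathbb P^{\mathcal T_{\mathcal H}}_\nu\Big(\bigvee_{(\ell,\ell')\in L^{\mathsf{SR}}}\mathbf{GF}(\ell\wedge\mathbf X\ell')\Big)=1,$$ where $\mathbf{GF}(\ell\wedge\mathbf X\ell')$ is the set of runs $s_0s_1\ldots$ such that for infinitely many $k$, $s_k\in\{\ell\}\times\mathbb R^n$ and $s_{k+1}\in\{\ell'\}\times\mathbb R^n$.
   Context: Stochastic hybrid system (SHS) with $n$ variables: finite set $L$ of locations; finite set $E$ of edges $e=(\ell,a,\ell')$; invariants, flows $\gamma_\ell$, guards $\mathcal G(e)$ and reset maps $\mathcal R_e$; states $S_{\mathcal H}=L\times\mathbb R^n$. Probabilistic data: delay distributions $\mu_s$ on $\mathbb R^+$, edge distributions $w_{s'}$ over enabled edges, reset distributions $\eta_e(\mathbf v)$ on $\mathbb R^n$. The STS $\mathcal T_{\mathcal H}$ has kernel $\kappa((\ell,\mathbf v),\{\ell'\}\times D)=\int\sum_{e=(\ell,a,\ell')}w_{s+\tau}(e)\,\eta_e(\gamma_\ell(\mathbf v,\tau))(D)\,d\mu_s(\tau)$ where $s=(\ell,\mathbf v)$, $s+\tau=(\ell,\gamma_\ell(\mathbf v,\tau))$; in particular each step of a run follows an edge of $E$. An edge $e$ is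 strongly reset if $\eta_e(\mathbf v)$ is independent of $\mathbf v$. $\mathcal H$ is cycle-reset if every cycle of the directed graph on $L$ with an arc $\ell\to\ell'$ whenever some edge from $\ell$ to $\ell'$ exists contains an arc $\ell\to\ell'$ such that all edges from $\ell$ to $\ell'$ are strongly reset. $\mathbb P^{\mathcal T_{\mathcal H}}_\nu$ is the induced probability measure on runs. *)

(* Defs.v *)
From HB Require Import structures.
From mathcomp Require Import all_boot all_order all_algebra.
From mathcomp Require Import all_classical all_reals all_analysis.
Set Implicit Arguments. Unset Strict Implicit. Unset Printing Implicit Defensive.
Import Order.TTheory GRing.Theory Num.Theory.
Local Open Scope classical_set_scope.
Local Open Scope ring_scope.

(* nonempty (needed because measurable types are pointed in the lib).   *)
Definition stateT (R : realType) (n : nat) (L : finType) (l0 : L) : Type :=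
  (L * n.-tuple R)%type.

HB.instance Definition _ (R : realType) n (L : finType) (l0 : L) :=
  Choice.on (stateT R n l0).
HB.instance Definition _ (R : realType) n (L : finType) (l0 : L) :=
  isPointed.Build (stateT R n l0) ((l0, [tuple of nseq n (0:R)]) : L * n.-tuple R).

(* a set of states is measurable iff each location slice is Borel in R^n
   (product of the discrete sigma-algebra on L with the Borel one on R^n) *)
Definition state_measurable (R : realType) n (L : finType) (l0 : L)
  (B : set (stateT R n l0)) : Prop :=
  forall l : L, measurable [set v : n.-tuple R | B (l, v)].

Section state_measurable_props.
Context (R : realType) (n : nat) (L : finType) (l0 : L).
Lemma state_measurable0 : state_measurable (@set0 (stateT R n l0)).
Proof. by move=> l; rewrite (_ : [set v | _] = set0) //; exact: measurable0. Qed.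
Lemma state_measurableC (B : set (stateT R n l0)) :
  state_measurable B -> state_measurable (~` B).
Proof.
move=> mB l; rewrite (_ : [set v | _] = ~` [set v | B (l, v)]) //.
exact: measurableC.
Qed.
Lemma state_measurable_bigcup (F : (set (stateT R n l0))^nat) :
  (forall i, state_measurable (F i)) -> state_measurable (\bigcup_i F i).
Proof.
move=> mF l; rewrite (_ : [set v | _] = \bigcup_i [set v | F i (l, v)]) //.
by apply: bigcupT_measurable => i; exact: (mF i l).
Qed.
End state_measurable_props.

Fact state_display : measure_display. Proof. exact: default_measure_display. Qed.

HB.instance Definition _ (R : realType) n (L : finType) (l0 : L) :=
  @isMeasurable.Build state_display (stateT R n l0) (@state_measurable R n L l0)
    (@state_measurable0 R n L l0) (@state_measurableC R n L l0)
    (@state_measurable_bigcup R n L l0).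

Definition coord_cylinders (R : realType) n (L : finType) (l0 : L) :
  set (set (nat -> stateT R n l0)) :=
  [set X | exists (k : nat) (B : set (stateT R n l0)),
     measurable B /\ X = [set w | B (w k)]].

Definition runT (R : realType) n (L : finType) (l0 : L) :=
  g_sigma_algebraType (@coord_cylinders R n L l0).

Record SHS (R : realType) (n : nat) (L A : finType) := {
  shs_edges : {set L * A * L};
  shs_inv   : L -> set (n.-tuple R);
  shs_flow  : L -> n.-tuple R -> R -> n.-tuple R;
  shs_guard : L * A * L -> set (n.-tuple R);
  shs_reset : L * A * L -> n.-tuple R -> set (n.-tuple R);
  shs_delay : L -> n.-tuple R -> probability R R;
  shs_w     : L -> n.-tuple R -> L * A * L -> R;
  shs_eta   : L * A * L -> n.-tuple R -> probability (n.-tuple R) R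
}.

Section SHS_defs.
Context (R : realType) (n : nat) (L A : finType) (H : SHS R n L A).

Definition src (e : L * A * L) : L := e.1.1.
Definition dst (e : L * A * L) : L := e.2.

Definition enabled (l : L) (v : n.-tuple R) (e : L * A * L) : bool :=
  (e \in shs_edges H) && (src e == l) && `[< shs_guard H e v >].

Definition SHS_wf : Prop :=
  (forall l v, shs_delay H l v [set t : R | 0 <= t] = 1%E) /\
  (forall l v e, 0 <= shs_w H l v e) /\
  (forall l v e, shs_w H l v e != 0 -> enabled l v e) /\
  (forall l v, \sum_(e | enabled l v e) shs_w H l v e = 1).

Definition strongly_reset (e : L * A * L) : Prop :=
  forall v v' (D : set (n.-tuple R)), shs_eta H e v D = shs_eta H e v' D.

Definition loc_arc : rel L := fun l l' => [exists a : A, (l, a, l') \in shs_edges H].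

Definition SR_arc (l l' : L) : Prop :=
  loc_arc l l' /\ forall a : A, (l, a, l') \in shs_edges H -> strongly_reset (l, a, l').

Definition cycle_reset : Prop :=
  forall c : seq L, c != [::] -> uniq c -> cycle loc_arc c ->
    exists2 x, x \in c & SR_arc x (next c x).

Context (l0 : L).
Local Notation S := (stateT R n l0).

(* the kernel kappa of T_H, extended to all measurable B by additivity over
   the target location:  kappa(s, B) = sum_l' kappa(s, {l'} x B_l')       *)
Definition shs_kernel (s : S) (B : set S) : \bar R :=
  let l := s.1 in let v := s.2 in
  (\int[shs_delay H l v]_(t in [set: R])
     (\sum_(e | (e \in shs_edges H) && (src e == l))
        ((shs_w H l (shs_flow H l v t) e)%:E *
         shs_eta H e (shs_flow H l v t) [set v' | B (dst e, v')])))%E.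

(* iterated integral giving the probability of the cylinder
   s_j in A j, ..., s_{j+m} in A (j+m), starting from s *)
Fixpoint cyl_int (kap : S -> set S -> \bar R) (As : nat -> set S)
    (m j : nat) (s : S) : \bar R :=
  match m with
  | 0 => (\1_(As j) s)%:E
  | m'.+1 => ((\1_(As j) s)%:E * \int[kap s]_(t in [set: S]) cyl_int kap As m' j.+1 t)%E
  end.

(* P is the probability measure P^{T_H}_nu on runs induced by the kernel and
   the initial distribution nu (Ionescu-Tulcea): it is characterised by its
   values on the finite-dimensional cylinders. *)
Definition is_run_measure (nu : probability S R)
    (P : probability (runT R n l0) R) : Prop :=
  forall (k : nat) (As : nat -> set S), (forall i, measurable (As i)) ->
    P [set w : runT R n l0 | forall i, (i <= k)%N -> As i (w i)] =
    (\int[nu]_(s in [set: S]) cyl_int shs_kernel As k 0 s)%E.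

Definition GF_step (l l' : L) : set (runT R n l0) :=
  [set w | forall N : nat, exists2 k : nat, (N <= k)%N &
     (w k).1 = l /\ (w k.+1).1 = l'].

Definition GF_SR : set (runT R n l0) :=
  [set w | exists l l' : L, SR_arc l l' /\ GF_step l l' w].

End SHS_defs.

(* Main.v *)
Require Import Defs.
From HB Require Import structures.
From mathcomp Require Import all_boot all_order all_algebra.
From mathcomp Require Import all_classical all_reals all_analysis.
Set Implicit Arguments. Unset Strict Implicit. Unset Printing Implicit Defensive.
Import Order.TTheory GRing.Theory Num.Theory.
Local Open Scope classical_set_scope.
Local Open Scope ring_scope.

Lemma mem_bigsetU (I : eqType) (T : Type) (s : seq I) (F : I -> set T) x :
  (\big[setU/set0]_(i <- s) F i) x <-> exists i, i \in s /\ F i x.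
Proof.
elim: s => [|a s IH]; first by rewrite big_nil; split => // -[i []].
rewrite big_cons; split.
  case=> [h|/IH [i [si hi]]]; first by exists a; rewrite mem_head.
  by exists i; rewrite in_cons si orbT.
case=> i []; rewrite in_cons => /orP[/eqP->|si] hi; first by left.
by right; apply/IH; exists i.
Qed.

Section graph.
Variables (L : finType) (e : rel L) (SR : L -> L -> Prop) (x : nat -> L).
Definition io a b := forall N, exists2 k, (N <= k)%N & x k = a /\ x k.+1 = b.

Lemma graph_lemma :
  (forall k, e (x k) (x k.+1)) ->
  (forall c : seq L, c != [::] -> uniq c -> cycle e c ->
     exists2 y, y \in c & SR y (next c y)) ->
  exists a b, SR a b /\ io a b.
Proof.
move=> ex cyc.
have: forall p : L * L, exists N : nat, ~ io p.1 p.2 ->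
    forall k, (N <= k)%N -> ~ (x k = p.1 /\ x k.+1 = p.2).
  move=> p; case: (pselect (io p.1 p.2)) => h; first by exists 0%N.
  move/existsNP: h => [N hN]; exists N => _ k Nk hk; apply: hN; by exists k.
move/choice => [f hf].
pose N0 := (\max_(p : L * L) f p)%N.
have hio : forall k, (N0 <= k)%N -> io (x k) (x k.+1).
  move=> k hk; apply: contrapT => nio.
  apply: (hf (x k, x k.+1) nio k) => //.
  exact: leq_trans (leq_bigmax _) hk.
pose e' := fun a b => e a b && `[< io a b >].
have step : forall k, (N0 <= k)%N -> e' (x k) (x k.+1).
  by move=> k hk; rewrite /e' ex; apply/asboolP; exact: hio.
have conn : forall m k, (N0 <= k)%N -> connect e' (x k) (x (k + m)).
  elim => [|m IH] k hk; first by rewrite addn0 connect0.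
  rewrite addnS; apply: connect_trans (IH k hk) (connect1 _).
  by apply: step; exact: leq_trans hk (leq_addr _ _).
have [k1 [k2 [hk1 k12 xk]]] : exists k1 k2, [/\ (N0 <= k1)%N, (k1 < k2)%N &
    x k1 = x k2].
  pose g := fun i : 'I_#|L|.+1 => x (N0 + i).
  have [i [j [ij gij]]] : exists i j, i != j /\ g i = g j.
    apply: contrapT => hn.
    have ginj : injective g.
      move=> i j gij; case: (eqVneq i j) => // nij; exfalso; apply: hn.
      by exists i, j.
    by have := @leq_card _ _ g ginj; rewrite card_ord ltnn.
  case: (ltngtP i j) => hij.
  - by exists (N0 + i)%N, (N0 + j)%N; split => //; [exact: leq_addr|rewrite ltn_add2l].
  - by exists (N0 + j)%N, (N0 + i)%N; split => //; [exact: leq_addr|rewrite ltn_add2l].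
  - by move: ij; rewrite (val_inj hij) eqxx.
have ezu : e' (x k1) (x k1.+1) by exact: step.
have cuz : connect e' (x k1.+1) (x k1).
  rewrite xk (_ : k2 = k1.+1 + (k2 - k1.+1))%N; last by rewrite subnKC.
  by apply: conn; exact: leqW.
case/connectP: cuz => p pp lp.
move: lp; case: (shortenP pp) => p' pp' up' _ lp.
have cc : cycle e' (x k1.+1 :: p').
  by rewrite /cycle rcons_path pp' /= -lp.
have ce : cycle e (x k1.+1 :: p').
  by apply: sub_cycle cc => a b /andP[].
have [y yc sry] := cyc (x k1.+1 :: p') isT up' ce.
have /andP[_ /asboolP iy] := next_cycle cc yc.
by exists y, (next (x k1.+1 :: p') y); split.
Qed.
End graph.
Section intzero.
Context d (T : measurableType d) (R : realType).
Import HBNNSimple.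
Local Open Scope ereal_scope.

Lemma nn_zero (mu : set T -> \bar R) (B : set T) (g : T -> \bar R) :
  (forall B', B' `<=` B -> mu B' = 0) ->
  (forall x, ~ B x -> g x <= 0) -> (forall x, 0 <= g x) ->
  ereal_sup [set sintegral mu h |
    h in [set h : {nnsfun T >-> R} | forall x, (h x)%:E <= g x]] = 0.
Proof.
move=> muB gB g0.
have si : forall h : {nnsfun T >-> R}, (forall x, (h x)%:E <= g x) ->
    sintegral mu h = 0.
  move=> h hg; rewrite /sintegral fsbig1 // => r _.
  case: (eqVneq r 0%R) => [->|r0]; first by rewrite mul0e.
  rewrite muB ?mule0 // => y /= hy; apply: contrapT => nBy.
  have := le_trans (hg y) (gB _ nBy); rewrite hy lee_fin => r_le0.
  have : (0 <= h y)%R by exact: fun_ge0.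
  by rewrite hy => r_ge0; move: r0; rewrite eq_le r_le0 r_ge0.
apply/eqP; rewrite eq_le; apply/andP; split.
  by apply: ge_ereal_sup => _ [h hg <-]; rewrite si.
apply: ereal_sup_ubound; exists nnsfun0; last by rewrite si.
by move=> x; exact: g0.
Qed.

Lemma int_zero (mu : set T -> \bar R) (B : set T) (f : T -> \bar R) :
  (forall B', B' `<=` B -> mu B' = 0) ->
  (forall x, ~ B x -> f x = 0) ->
  \int[mu]_(x in setT) f x = 0.
Proof.
move=> muB fB; rewrite /integral /= patch_setT.
rewrite (@nn_zero mu B) //; last first.
  by move=> x nBx; rewrite funeposE /= fB // maxxx.
rewrite (@nn_zero mu B) ?sube0 // => x nBx.
by rewrite funenegE /= fB // oppe0 maxxx.
Qed.
End intzero.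
Section shs.
Context (R : realType) (n : nat) (L A : finType) (H : SHS R n L A) (l0 : L).
Local Notation S := (stateT R n l0).

Lemma kernel_zero (s : S) (B : set S) :
  (forall e, e \in shs_edges H -> src e = s.1 -> [set v' | B (dst e, v')] = set0) ->
  shs_kernel H s B = 0%E.
Proof.
move=> hB; rewrite /shs_kernel; apply: integral0_eq => t _.
rewrite big1 // => e /andP[Ee /eqP se].
by rewrite hB // measure0 mule0.
Qed.

Lemma const_meas (P : Prop) : measurable [set v : n.-tuple R | P].
Proof.
case: (pselect P) => p.
  have -> : [set v : n.-tuple R | P] = setT by apply: funext => v; apply: propext.
  exact: measurableT.
have -> : [set v : n.-tuple R | P] = set0 by apply: funext => v; apply: propext.
exact: measurable0.
Qed.

Lemma loc_meas (P : L -> Prop) : measurable [set s : S | P s.1].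
Proof. move=> l; exact: (const_meas (P l)). Qed.

Definition As (k : nat) (l : L) : nat -> set S := fun i =>
  if i == k then [set s : S | s.1 = l]
  else if i == k.+1 then [set s : S | ~~ loc_arc H l s.1] else setT.

Lemma As_meas k l i : measurable (As k l i).
Proof.
rewrite /As; case: ifP => _; first exact: (loc_meas (fun x => x = l)).
case: ifP => _; first exact: (loc_meas (fun x => is_true (~~ loc_arc H l x))).
exact: measurableT.
Qed.

Lemma cyl_zero k (l : L) : forall m j (s : S), (j + m = k)%N ->
  cyl_int (@shs_kernel _ _ _ _ H l0) (As k l) m.+1 j s = 0%E.
Proof.
elim => [|m IH] j s hj /=.
  rewrite addn0 in hj; subst j.
  case: (eqVneq s.1 l) => sl; last first.
    by rewrite indicE /As eqxx memNset /= ?mul0e //; apply/eqP.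
  rewrite (@int_zero _ _ _ _ (As k l k.+1)) ?mule0 //.
    move=> B' B'B; apply: kernel_zero => e Ee se.
    apply/seteqP; split => // v' /B'B; rewrite /As gtn_eqF //= eqxx.
    move: Ee se; case: e => [[a b] c] /= Ee se; rewrite /loc_arc -sl -se /=.
    by move/negP; apply; apply/existsP; exists b.
  by move=> t nt; rewrite indicE memNset.
rewrite (@int_zero _ _ _ _ set0) ?mule0 //.
  move=> B' B'0; apply: kernel_zero => e _ _.
  by apply/seteqP; split => // v' /B'0.
by move=> t _; apply: IH; rewrite addSnnS.
Qed.

Local Notation RT := (runT R n l0).

Lemma cyl_meas (k : nat) (B : set S) : measurable B ->
  measurable [set w : RT | B (w k)].
Proof. by move=> mB; apply: sub_sigma_algebra; exists k, B. Qed.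

Definition Nset k (l : L) : set RT :=
  [set w | forall i, (i <= k.+1)%N -> As k l i (w i)].

Lemma Nset_meas k l : measurable (Nset k l).
Proof.
have -> : Nset k l = \bigcap_i [set w : RT |
    (if (i <= k.+1)%N then As k l i else setT) (w i)].
  apply/seteqP; split => w /= hw.
    by move=> i _ /=; case: ifP => // hi; exact: hw.
  by move=> i hi; have := hw i I; rewrite /= hi.
apply: bigcapT_measurable => i; apply: cyl_meas.
by case: ifP => _; [exact: As_meas|exact: measurableT].
Qed.

Lemma negl_seq (P : probability RT R) (F : L -> set RT) (s : seq L) :
  (forall l, P.-negligible (F l)) ->
  P.-negligible (\big[setU/set0]_(l <- s) F l).
Proof.
move=> hF; elim: s => [|a s IH]; first by rewrite big_nil; exact: negligible_set0.
by rewrite big_cons; apply: negligibleU.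
Qed.

Lemma step_meas (l l' : L) : measurable (@GF_step R n L l0 l l').
Proof.
have -> : @GF_step R n L l0 l l' = \bigcap_N \bigcup_(k in [set k | (N <= k)%N])
    ([set w : RT | [set s : S | s.1 = l] (w k)] `&`
     [set w : RT | [set s : S | s.1 = l'] (w k.+1)]).
  apply/seteqP; split => w /= hw.
    by move=> N _; have [k Nk [h1 h2]] := hw N; exists k.
  by move=> N; have [k /= Nk [h1 h2]] := hw N I; exists k.
apply: bigcapT_measurable => N; apply: bigcup_measurable => k _.
apply: measurableI; apply: cyl_meas.
  exact: (loc_meas (fun x => x = l)).
exact: (loc_meas (fun x => x = l')).
Qed.

End shs.

Theorem mainTheorem10 (R : realType) (n : nat) (L A : finType) (l0 : L)
  (H : SHS R n L A) :
  SHS_wf H -> cycle_reset H ->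
  forall (nu : probability (stateT R n l0) R)
         (P : probability (runT R n l0) R),
    is_run_measure H nu P ->
    P (@GF_SR R n L A H l0) = 1%E.
Proof.
move=> _ cr nu P hrun.
have mG : measurable (@GF_SR R n L A H l0).
  have -> : @GF_SR R n L A H l0 = \big[setU/set0]_(p <- enum {: L * L})
      (if `[< SR_arc H p.1 p.2 >] then @GF_step R n L l0 p.1 p.2 else set0).
    apply/seteqP; split => w.
      move=> [a [b [sr g]]]; apply/mem_bigsetU; exists (a, b).
      by rewrite mem_enum /=; split => //; rewrite asboolT.
    move/mem_bigsetU => [[a b] [_ /=]]; case: ifP => // /asboolP sr g.
    by exists a, b.
  apply: bigsetU_measurable => p _; case: ifP => _; last exact: measurable0.
  exact: step_meas.
have NP : forall k l, P (Nset H k l) = 0%E.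
  move=> k l; rewrite /Nset (hrun k.+1 (As H k l)); last exact: As_meas.
  apply: integral0_eq => s _.
  exact: (@cyl_zero _ _ _ _ H l0 k l k 0 s).
have negl : P.-negligible (~` @GF_SR R n L A H l0).
  apply: (@negligibleS _ _ _ _
    (\bigcup_k \big[setU/set0]_(l <- enum {: L}) Nset H k l)).
    move=> w nG; apply: contrapT => nb; apply: nG.
    have ar : forall k, loc_arc H (w k).1 (w k.+1).1.
      move=> k; case: (boolP (loc_arc H (w k).1 (w k.+1).1)) => // hk; exfalso; apply: nb; exists k => //.
      apply/mem_bigsetU; exists (w k).1; split; first by rewrite mem_enum.
      move=> i hi; rewrite /As; case: ifP => [/eqP -> //|_].
      by case: ifP => [/eqP -> |_].

    have [a [b [sr io]]] := graph_lemma (SR:=SR_arc H) ar cr.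
    by exists a, b; split.
  apply: negligible_bigcup => k; apply: negl_seq => l.
  by exists (Nset H k l); split => //; exact: Nset_meas.
have := measure_negligible (measurableC mG) negl.
move=> h.
have e : (1 - P (@GF_SR R n L A H l0))%E = 0%E.
  by rewrite -h; exact: (esym (probability_setC P mG)).
move: e; case: (P (@GF_SR R n L A H l0)) => [r| |] //= e.
congr (_%:E); apply/eqP; rewrite eq_sym -subr_eq0; apply/eqP.
by case: e.
Qed.
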